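(* Let $X$ be an amoebot structure with $n$ amoebots satisfying the standing assumptions below, and let $S_1,S_2\subseteq X$ be non-empty. Suppose an $S_1$-shortest path forest and an $S_2$-shortest path forest are given (each amoebot knows whether it is in $S_1$, in $S_2$, and its parent in each forest). There is an algorithm in the reconfigurable circuit model (the merging algorithm) that computes an $(S_1\cup S_2)$-shortest path forest within $O(\log n)$ rounds.
   Context: Geometric amoebot model with reconfigurable circuits: $G_\Delta$ is the infinite regular triangular grid graph; an amoebot structure is a finite set $X$ of grid nodes, $n=|X|$, each occupied by an anonymous constant-memory amoebot, with $G_X=(X,E_X)$ the induced subgraph, assumed connected. Each edge of $G_X$ is replaced by a constant number of external links with pins at both endpoints (labeling agreed by neighbors); each amoebot partitions its pins into partition sets; circuits are connected components of the graph on all partition sets joined by external links. In synchronous rounds every amoebot may update its state, change its partition and beep on partition sets; beeps are received at the start of the next round by all partition sets of the same circuit (without sender identity or count). Standing assumptions: $X$ has no holes (the subgraph induced by $V_\Delta\setminus X$ is connected), amoebots share compass orientation and chirality, and a unique leader is known. An $S$-shortest path forest is a family of rooted trees $T_s=(V_s,E_s)$, $s\in S$, $V_s\subseteq X$, $E_s\subseteq E_X$, rooted at $s$, with pairwise disjoint $V_s$ covering $X$, such that for every $u\in V_s$ the tree path from $s$ to $u$ is a shortest path in $G_X$ and $s$ is a closest amoebot of $S$ to $u$; computing it means every amoebot not in $S$ knows its parent. *)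

(* Defs.v *)
From HB Require Import structures.
From mathcomp Require Import all_boot all_order all_algebra.
From mathcomp Require Import finmap.
Set Implicit Arguments. Unset Strict Implicit. Unset Printing Implicit Defensive.
Import GRing.Theory Num.Theory.
Local Open Scope fset_scope.

Definition node := (int * int)%type.

(* The six global directions (shared compass orientation and chirality). *)
Definition dirv (d : 'I_6) : int * int :=
  match val d with
  | 0 => ((Posz 1), (Posz 0)) | 1 => ((Posz 0), (Posz 1)) | 2 => ((Negz 0), (Posz 1))
  | 3 => ((Negz 0), (Posz 0)) | 4 => ((Posz 0), (Negz 0)) | _ => ((Posz 1), (Negz 0)) end.

Definition shift (u : node) (d : 'I_6) : node :=
  ((u.1 + (dirv d).1)%R, (u.2 + (dirv d).2)%R).

Definition opp (d : 'I_6) : 'I_6 := inord ((val d + 3) %% 6).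

(* walks of length k from u to v in the subgraph of G_Delta induced by P
   (u itself is not constrained; v and all later nodes satisfy P) *)
Fixpoint walk (P : node -> bool) (k : nat) (u v : node) : Prop :=
  match k with
  | 0 => u = v
  | k'.+1 => exists d : 'I_6, P (shift u d) /\ walk P k' (shift u d) v
  end.

Definition inX (X : {fset node}) : node -> bool := fun x => x \in X.
Definition outX (X : {fset node}) : node -> bool := fun x => x \notin X.

Definition connectedX (X : {fset node}) : Prop :=
  forall u v, u \in X -> v \in X -> exists k, walk (inX X) k u v.

Definition no_holes (X : {fset node}) : Prop :=
  forall a b, a \notin X -> b \notin X -> exists k, walk (outX X) k a b.

Definition is_dist (X : {fset node}) (u v : node) (k : nat) : Prop :=
  walk (inX X) k u v /\ forall k', walk (inX X) k' u v -> k <= k'.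

Fixpoint follow (par : node -> option node) (k : nat) (u : node) : option node :=
  match k with
  | 0 => Some u
  | k'.+1 => match par u with Some w => follow par k' w | None => None end
  end.

Definition IsSPF (X S : {fset node}) (par : node -> option node) : Prop :=
  (forall u, u \in X -> u \in S -> par u = None) /\
  (forall u, u \in X -> u \notin S ->
     exists d, par u = Some (shift u d) /\ shift u d \in X) /\
  (forall u, u \in X -> exists s k,
     [/\ s \in S, follow par k u = Some s, is_dist X u s k &
         forall s' k', s' \in S -> walk (inX X) k' u s' -> k <= k']).

Definition par_of (D : node -> option 'I_6) : node -> option node :=
  fun u => omap (shift u) (D u).

Record algo := Algo {
  st : finType;                      (* constant memory *)
  npins : nat;                       (* constant number of pins per edge *)
  (* initial state from local input: in S1, in S2, parent dir in forest 1,
     parent dir in forest 2, is leader, occupancy of the 6 neighbour positions *)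
  init : bool -> bool -> option 'I_6 -> option 'I_6 -> bool -> ('I_6 -> bool) -> st;
  (* partition of pins (direction, index) into partition sets, named by a
     representative pin; determined by the current state *)
  part : st -> 'I_6 * 'I_npins -> 'I_6 * 'I_npins;
  beep : st -> 'I_6 * 'I_npins -> bool;
  (* transition: current state, neighbour occupancy, beeps received on
     partition sets (of the previous partition) -> new state *)
  step : st -> ('I_6 -> bool) -> ('I_6 * 'I_npins -> bool) -> st;
  final : st -> bool;
  out : st -> option 'I_6             (* parent direction in the output forest *)
}.
Arguments init : clear implicits.
Arguments part : clear implicits.
Arguments beep : clear implicits.
Arguments step : clear implicits.
Arguments final : clear implicits.
Arguments out : clear implicits.

Section Semantics.
Variables (A : algo) (X : {fset node}).

Definition lab := ('I_6 * 'I_(npins A))%type.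

Definition occ (v : X) : 'I_6 -> bool := fun d => shift (val v) d \in X.

Definition link (q : X -> st A) : rel (X * lab) :=
  fun a b =>
    [exists d : 'I_6, [exists i : 'I_(npins A),
      [&& val b.1 == shift (val a.1) d,
          part A (q a.1) (d, i) == a.2 &
          part A (q b.1) (opp d, i) == b.2]]].

Definition same_circuit (q : X -> st A) : rel (X * lab) :=
  connect (fun a b => link q a b || link q b a).

Definition recv (q : X -> st A) (v : X) : lab -> bool :=
  fun l => [exists u : X, [exists l' : lab,
             beep A (q u) l' && same_circuit q (u, l') (v, l)]].

Definition round (q : X -> st A) : X -> st A :=
  fun v => step A (q v) (occ v) (recv q v).

Definition init_conf (S1 S2 : {fset node}) (ldr : node)
  (D1 D2 : node -> option 'I_6) : X -> st A :=
  fun v => init A (val v \in S1) (val v \in S2) (D1 (val v)) (D2 (val v))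
                  (val v == ldr) (occ v).

Definition run S1 S2 ldr D1 D2 (t : nat) : X -> st A :=
  iter t round (init_conf S1 S2 ldr D1 D2).

Definition out_dirs (q : X -> st A) : node -> option 'I_6 :=
  fun u => match insub u with Some v => out A (q v) | None => None end.

End Semantics.

Definition terminating (A : algo) : Prop :=
  forall s o r, final A s -> step A s o r = s.

Arguments occ : clear implicits.
Arguments link : clear implicits.
Arguments same_circuit : clear implicits.
Arguments recv : clear implicits.
Arguments round : clear implicits.
Arguments init_conf : clear implicits.
Arguments run : clear implicits.
Arguments out_dirs : clear implicits.

(* Main.v *)
From Pilot Require Import Defs.
From mathcomp Require Import all_boot all_order all_algebra.
From mathcomp Require Import finmap.
From mathcomp Require Import zify.
From Stdlib Require Import Lia.
Set Implicit Arguments. Unset Strict Implicit. Unset Printing Implicit Defensive.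
Import GRing.Theory Num.Theory.
Import Pilot.Defs.


Lemma opp_val (d : 'I_6) : nat_of_ord (opp d) = (nat_of_ord d + 3) %% 6.
Proof. rewrite /opp inordK //; by rewrite ltn_pmod. Qed.

Lemma oppK (d : 'I_6) : opp (opp d) = d.
Proof.
apply: ord_inj; rewrite !opp_val.
case: d => [[|[|[|[|[|[|m]]]]]] Hd] //.
Qed.

Lemma dirv_opp (d : 'I_6) :
  dirv (opp d) = ((- (dirv d).1)%R, (- (dirv d).2)%R).
Proof.
have E : forall e : 'I_6, dirv e = match nat_of_ord e with
  | 0 => ((Posz 1), (Posz 0)) | 1 => ((Posz 0), (Posz 1)) | 2 => ((Negz 0), (Posz 1))
  | 3 => ((Negz 0), (Posz 0)) | 4 => ((Posz 0), (Negz 0)) | _ => ((Posz 1), (Negz 0)) end by [].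
rewrite !E opp_val.
by case: d => [[|[|[|[|[|[|m]]]]]] Hd].
Qed.

Lemma shift_opp (u : node) d : shift (shift u d) (opp d) = u.
Proof.
rewrite /shift dirv_opp /=; case: u => a b /=; congr (_,_); by rewrite addrK.
Qed.

Lemma shift_inj u v d : shift u d = shift v d -> u = v.
Proof.
move=> H; rewrite -(shift_opp u d) -(shift_opp v d) H //.
Qed.

Lemma dirv_inj : injective dirv.
Proof.
move=> d e.
case: d => [[|[|[|[|[|[|m]]]]]] Hd] //; case: e => [[|[|[|[|[|[|m']]]]]] He] //= H;
  try (apply: val_inj => //); try (by case: H).
Qed.

Lemma shift_dinj (u : node) d e : shift u d = shift u e -> d = e.
Proof.
rewrite /shift; case=> H1 H2; apply: dirv_inj.
move: (addrI _ H1) (addrI _ H2); case: (dirv d) => a b; case: (dirv e) => c f /= -> -> //.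
Qed.

Lemma shift_eq_opp (u v : node) d : v = shift u d -> u = shift v (opp d).
Proof. by move=> ->; rewrite shift_opp. Qed.

Lemma shift_opp' (u : node) d : shift (shift u (opp d)) d = u.
Proof. by rewrite -{2}(oppK d) shift_opp. Qed.
Section Layer.
Variables (X S : {fset node}) (D : node -> option 'I_6).
Hypothesis subSX : (S `<=` X)%fset.
Hypothesis spf : IsSPF X S (par_of D).

Lemma root_iff u : u \in X -> (D u == None) = (u \in S).
Proof.
case: spf => [H1 [H2 H3]] uX.
case: (boolP (u \in S)) => uS.
  by move: (H1 u uX uS); rewrite /par_of; case: (D u).
case: (H2 u uX uS) => d []; rewrite /par_of; by case: (D u).
Qed.

Lemma par_in u e : u \in X -> D u = Some e -> shift u e \in X.
Proof.
case: spf => [H1 [H2 H3]] uX De.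
have uS : u \notin S by rewrite -root_iff // De.
case: (H2 u uX uS) => d []; by rewrite /par_of De => /Some_inj ->.
Qed.

Definition dep u j : bool :=
  if follow (par_of D) j u is Some s then s \in S else false.

Lemma follow_add j m u :
  follow (par_of D) (j + m) u =
  if follow (par_of D) j u is Some w then follow (par_of D) m w else None.
Proof.
elim: j u => [|j IH] u //=.
by case: (par_of D u).
Qed.

Lemma dep_uniq u j j' : dep u j -> dep u j' -> j = j'.
Proof.
have K : forall a b, a < b -> dep u a -> dep u b -> False.
  move=> a b ab.
  have -> : b = a + (b - a.+1).+1 by rewrite addnS -addSn subnKC.
  rewrite /dep follow_add.
  case: (follow (par_of D) a u) => // s sS.
  have sX : s \in X by apply: (fsubsetP subSX).
  have : D s == None by rewrite root_iff.
  by rewrite /= /par_of; move/eqP => ->.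
move=> a b; case: (ltngtP j j') => // H.
  by move: (K _ _ H a b).
by move: (K _ _ H b a).
Qed.

Definition depP u j := dep u j || ((u \notin X) && (j == 0)).

Lemma spf3 u : u \in X -> exists s k,
     [/\ s \in S, follow (par_of D) k u = Some s, is_dist X u s k &
         forall s' k', s' \in S -> walk (inX X) k' u s' -> k <= k'].
Proof. by case: spf => [_ [_ H3]] /H3. Qed.

Lemma depP_ex u : exists j, depP u j.
Proof.
case: (boolP (u \in X)) => uX; last by exists 0; rewrite /depP uX orbT.
case: (spf3 uX) => s [k [sS fk _ _]]; exists k; by rewrite /depP /dep fk sS.
Qed.

Definition hN u := ex_minn (depP_ex u).

Lemma hN_dep u : u \in X -> dep u (hN u).
Proof.
move=> uX; rewrite /hN; case: ex_minnP => m; by rewrite /depP uX orbF.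
Qed.

Lemma hN_eq u j : u \in X -> dep u j -> hN u = j.
Proof. move=> uX; apply: dep_uniq; exact: hN_dep. Qed.

Lemma hN_root u : u \in X -> D u = None -> hN u = 0.
Proof.
move=> uX Du; apply: hN_eq => //; by rewrite /dep /= -root_iff // Du.
Qed.

Lemma hN_par u e : u \in X -> D u = Some e -> hN u = (hN (shift u e)).+1.
Proof.
move=> uX De; have := hN_dep uX.
case E: (hN u) => [|j].
  rewrite /dep /= -root_iff //; by rewrite De.
rewrite /dep /= /par_of De /= => H.
congr (_.+1); apply/esym/hN_eq; first exact: par_in De.
by rewrite /dep.
Qed.

Lemma hN_gt0 u : u \in X -> (0 < hN u) = (D u != None).
Proof.
move=> uX; case E: (D u) => [e|] /=.
  by rewrite (hN_par uX E).
by rewrite (hN_root uX E).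
Qed.

Lemma no2cyc u e : u \in X -> D u = Some e -> D (shift u e) = Some (opp e) -> False.
Proof.
move=> uX De Dw.
have wX := par_in uX De.
move: (hN_par uX De) (hN_par wX Dw); rewrite shift_opp => ->.
lia.
Qed.

Lemma hN_spec u : u \in X -> exists s,
     [/\ s \in S, follow (par_of D) (hN u) u = Some s, is_dist X u s (hN u) &
         forall s' k', s' \in S -> walk (inX X) k' u s' -> hN u <= k'].
Proof.
move=> uX; case: (spf3 uX) => s [k [sS fk dk mk]].
have -> : hN u = k by apply: hN_eq; rewrite // /dep fk.
by exists s.
Qed.

Lemma hN_nbr u d : u \in X -> shift u d \in X -> hN u <= (hN (shift u d)).+1.
Proof.
move=> uX wX; case: (hN_spec wX) => s [sS _ [wk _] _].
case: (hN_spec uX) => _ [_ _ _ mk].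
apply: (mk s) => //=; by exists d; split.
Qed.

Lemma hN_anc u m : u \in X -> m <= hN u -> exists2 v, v \in X & hN v = m.
Proof.
move=> uX mh.
suff K : forall j u, hN u = j -> u \in X -> m <= j -> exists2 v, v \in X & hN v = m.
  exact: (K _ u erefl uX mh).
clear uX mh; move=> j; elim: j {u} => [|j IH] u E uX.
  by rewrite leqn0 => /eqP ->; exists u.
rewrite leq_eqVlt => /orP [/eqP ->|]; first by exists u.
rewrite ltnS => mj.

case De: (D u) => [e|]; last by rewrite hN_root in E.
rewrite (hN_par uX De) in E; case: E => E.
apply: (IH (shift u e)) => //; exact: par_in De.
Qed.

Definition parN u := if D u is Some e then shift u e else u.

Lemma parN_iter u m : u \in X -> m <= hN u ->
  iter m parN u \in X /\ hN (iter m parN u) = hN u - m.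
Proof.
move=> uX; elim: m => [|m IH] mh; first by rewrite subn0.
case: IH; first exact: ltnW.
set v := iter m parN u => vX hv.
rewrite iterS -/v; clearbody v; rewrite /parN.
case De: (D v) => [e|].
  split; first exact: par_in De.
  move: (hN_par vX De); rewrite hv => H.
  lia.
by rewrite hN_root // in hv; move: mh; rewrite -subn_gt0 -hv.
Qed.

Lemma hN_lt u : u \in X -> hN u < #|` X|.
Proof.
move=> uX.
set s := [seq iter m parN u | m <- iota 0 (hN u).+1].
have : size s <= #|` X|.
  apply: uniq_leq_size.
    rewrite map_inj_in_uniq ?iota_uniq //.
    move=> a b; rewrite !mem_iota /= !add0n !ltnS => ha hb E.
    case: (parN_iter uX ha) => _ Ea; case: (parN_iter uX hb) => _ Eb.
    move: Ea; rewrite E Eb => /eqP; rewrite eqn_sub2lE // => /eqP.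
    done.
  move=> x /mapP [m]; rewrite mem_iota /= add0n ltnS => hm ->.
  by case: (parN_iter uX hm).
by rewrite size_map size_iota.
Qed.

End Layer.

Section Follow.
Variables (X Sa Sb : {fset node}) (Da Db f : node -> option 'I_6).
Hypotheses (subA : (Sa `<=` X)%fset) (subB : (Sb `<=` X)%fset)
  (spfa : IsSPF X Sa (par_of Da)) (spfb : IsSPF X Sb (par_of Db)).
Variable strict : bool.
Definition condab v := if strict then hN spfa v < hN spfb v else hN spfa v <= hN spfb v.
Hypothesis Hf : forall v, v \in X -> condab v -> f v = Da v.

Lemma follow_good j v : v \in X -> hN spfa v = j -> condab v ->
  follow (par_of f) j v = follow (par_of Da) j v.
Proof.
elim: j v => [|j IH] v vX E cv //=.
case De: (Da v) => [e|]; last by rewrite (hN_root subA) in E.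
have pX := par_in spfa vX De.
rewrite /par_of (Hf vX cv) De /=.
apply: IH => //.
  by move: E; rewrite (hN_par subA spfa vX De) => -[].
have := hN_nbr subB spfb vX pX.
have := hN_par subA spfa vX De.
move: cv; rewrite /condab; case: strict; lia.
Qed.
End Follow.

Section Merge.
Variables (X S1 S2 : {fset node}) (D1 D2 f : node -> option 'I_6).
Hypotheses (sub1 : (S1 `<=` X)%fset) (sub2 : (S2 `<=` X)%fset)
  (spf1 : IsSPF X S1 (par_of D1)) (spf2 : IsSPF X S2 (par_of D2)).
Hypothesis Hf : forall u, u \in X ->
  f u = if hN spf2 u < hN spf1 u then D2 u else D1 u.

Lemma merge_spf : IsSPF X (S1 `|` S2)%fset (par_of f).
Proof.
split; [|split].
- move=> u uX /fsetUP uS; rewrite /par_of (Hf uX).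
  case: uS => uS.
    have D1u : D1 u = None by apply/eqP; rewrite (root_iff spf1).
    by rewrite (hN_root sub1 spf1 uX D1u) ltn0 D1u.
  have D2u : D2 u = None by apply/eqP; rewrite (root_iff spf2).
  rewrite (hN_root sub2 spf2 uX D2u) lt0n.
  case: ifP => [_|/negbFE /eqP H]; first by rewrite D2u.
  case E: (D1 u) => [e|] //.
  by rewrite (hN_par sub1 spf1 uX E) in H.
- move=> u uX; rewrite in_fsetU negb_or => /andP [u1 u2].
  rewrite /par_of (Hf uX).
  case E1: (D1 u) => [e1|]; last by move: u1; rewrite -(root_iff spf1) // E1.
  case E2: (D2 u) => [e2|]; last by move: u2; rewrite -(root_iff spf2) // E2.
  case: ifP => _ /=.
    by exists e2; split => //; apply: (par_in spf2 uX E2).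
  by exists e1; split => //; apply: (par_in spf1 uX E1).
- move=> u uX.
  case: (ltnP (hN spf2 u) (hN spf1 u)) => c.
  + case: (hN_spec sub2 spf2 uX) => s [sS fs ds ms].
    exists s, (hN spf2 u); split.
    * by rewrite in_fsetU sS orbT.
    * rewrite -fs; apply: (@follow_good X S2 S1 D2 D1 f sub2 sub1 spf2 spf1 true) => //.
      by move=> v vX; rewrite /condab => cv; rewrite Hf // cv.
    * by [].
    * move=> s' k' /fsetUP [s1|s2] w; last exact: ms w.
      case: (hN_spec sub1 spf1 uX) => _ [_ _ _ m1].
      have := m1 _ _ s1 w; lia.
  + case: (hN_spec sub1 spf1 uX) => s [sS fs ds ms].
    exists s, (hN spf1 u); split.
    * by rewrite in_fsetU sS.
    * rewrite -fs; apply: (@follow_good X S1 S2 D1 D2 f sub1 sub2 spf1 spf2 false) => //.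
      by move=> v vX; rewrite /condab => cv; rewrite Hf // ltnNge cv.
    * by [].
    * move=> s' k' /fsetUP [s1|s2] w; first exact: ms w.
      case: (hN_spec sub2 spf2 uX) => _ [_ _ _ m2].
      have := m2 _ _ s2 w; lia.
Qed.
End Merge.

Lemma conn_inv (T : finType) (K : eqType) (e : rel T) (g : T -> K) :
  (forall x y, e x y -> g x = g y) -> forall x y, connect e x y -> g x = g y.
Proof.
move=> H x y /connectP [p pth ->]; elim: p x pth => [|z p IH] x //=.
by move=> /andP [exz pz]; rewrite (H _ _ exz) (IH z pz).
Qed.

Section Circ.
Variables (A : algo) (X : {fset node}) (q : X -> st A).

Lemma linkP a b : link A X q a b -> exists d i,
  [/\ val b.1 = shift (val a.1) d, part A (q a.1) (d, i) = a.2 &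
      part A (q b.1) (opp d, i) = b.2].
Proof.
move=> /existsP [d /existsP [i /and3P [/eqP h1 /eqP h2 /eqP h3]]].
by exists d, i.
Qed.

Lemma linkI a b d i : val b.1 = shift (val a.1) d -> part A (q a.1) (d, i) = a.2 ->
  part A (q b.1) (opp d, i) = b.2 -> link A X q a b.
Proof.
move=> h1 h2 h3; apply/existsP; exists d; apply/existsP; exists i.
by rewrite h1 h2 h3 !eqxx.
Qed.

Lemma sc_inv (K : eqType) (V : X * lab A -> K) :
  (forall (u w : X) d i, val w = shift (val u) d ->
      V (u, part A (q u) (d, i)) = V (w, part A (q w) (opp d, i))) ->
  forall a b, same_circuit A X q a b -> V a = V b.
Proof.
move=> H; apply: conn_inv => -[x1 x2] [y1 y2] /orP [] /linkP [d [i [/= h1 h2 h3]]].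
  by rewrite -h2 -h3; apply: H.
by rewrite -h2 -h3; symmetry; apply: H.
Qed.

Lemma sc_link a b : link A X q a b -> same_circuit A X q a b.
Proof. by move=> h; apply: connect1; rewrite /= h. Qed.

Lemma sc_trans a b c : same_circuit A X q a b -> same_circuit A X q b c ->
  same_circuit A X q a c.
Proof. exact: connect_trans. Qed.

Lemma recvP v l : reflect (exists u l', beep A (q u) l' /\ same_circuit A X q (u, l') (v, l))
  (recv A X q v l).
Proof.
apply: (iffP existsP).
  by move=> [u /existsP [l' /andP [h1 h2]]]; exists u, l'.
by move=> [u [l' [h1 h2]]]; exists u; apply/existsP; exists l'; rewrite h1.
Qed.

Hypothesis idpart : forall u p, part A (q u) p = p.

Lemma sc_pair a b : same_circuit A X q a b ->
  b = a \/ (val b.1 = shift (val a.1) a.2.1 /\ b.2 = (opp a.2.1, a.2.2)).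
Proof.
case: a => a1 [ad ai] /=.
pose V (x : X * lab A) := (x == (a1, (ad, ai))) ||
   ((val x.1 == shift (val a1) ad) && (x.2 == (opp ad, ai))).
have HV : forall (u w : X) d i, val w = shift (val u) d ->
    V (u, part A (q u) (d, i)) = V (w, part A (q w) (opp d, i)).
  move=> u w d i E; rewrite !idpart /V /=; move: E => /= E.
  apply/idP/idP.
    case/orP => [/eqP [E1 E2 E3]|/andP [/eqP E1 /eqP [E2 E3]]].
      by rewrite E -E1 -E2 -E3 !eqxx orbT.
    apply/orP; left; apply/eqP.
    have wa : w = a1 by apply: val_inj => /=; rewrite E E1 E2 shift_opp.
    by rewrite wa E2 oppK E3.
  case/orP => [/eqP [E1 E2 E3]|/andP [/eqP E1 /eqP [E2 E3]]].
    apply/orP; right.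
    have dd : d = opp ad by rewrite -E2 oppK.
    by rewrite -E1 E dd shift_opp' E3 !eqxx.
  have dd : d = ad by rewrite -(oppK d) E2 oppK.
  apply/orP; left.
  have ua : u = a1 by apply: val_inj => /=; apply: (@shift_inj _ _ d); rewrite -E E1 dd.
  by rewrite ua dd E3.
move=> sc; have := sc_inv HV sc; rewrite /V eqxx /= => /esym /orP [/eqP ->|/andP [/eqP h1 /eqP h2]].
  by left.
by right.
Qed.
End Circ.

Definition stt := ((((bool * bool) * (option 'I_6 * option 'I_6)) *
   ({ffun 'I_6 -> bool} * {ffun 'I_6 -> bool})) * ((bool * bool) * bool))%type.

Definition mk (di fi : bool) (o1 o2 : option 'I_6) (c1 c2 : {ffun 'I_6 -> bool})
  (a1 a2 cm : bool) : stt := ((((di, fi), (o1, o2)), (c1, c2)), ((a1, a2), cm)).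

Definition disc (s : stt) := s.1.1.1.1.
Definition fin (s : stt) := s.1.1.1.2.
Definition dr (k : bool) (s : stt) := if k then s.1.1.2.2 else s.1.1.2.1.
Definition ch (k : bool) (s : stt) := if k then s.1.2.2 else s.1.2.1.
Definition ac (k : bool) (s : stt) := if k then s.2.1.2 else s.2.1.1.
Definition cm (s : stt) := s.2.2.

Definition nm (m : nat) : 'I_6 * 'I_12 := (ord0, inord m).
Definition nb (k : bool) := if k then 9 else 7.

Definition partf (s : stt) (p : 'I_6 * 'I_12) : 'I_6 * 'I_12 :=
  if disc s then p
  else if nat_of_ord p.2 == 4 then nm 11
  else if nat_of_ord p.2 < 4 then
    (if dr (1 < p.2) s == Some p.1 then nm (nb (1 < p.2) + (odd p.2 (+) ac (1 < p.2) s))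
     else if ch (1 < p.2) s p.1 then nm (nb (1 < p.2) + odd p.2) else (p.1, ord0))
  else (p.1, ord0).

Definition beepf (s : stt) (l : 'I_6 * 'I_12) : bool :=
  if fin s then false
  else if disc s then
    ((dr false s == Some l.1) && (nat_of_ord l.2 == 5)) ||
    ((dr true s == Some l.1) && (nat_of_ord l.2 == 6))
  else [|| (dr false s == None) && (l == nm 7), (dr true s == None) && (l == nm 9)
         | (ac false s || ac true s) && (l == nm 11)].

Definition stepf (s : stt) (o : 'I_6 -> bool) (r : 'I_6 * 'I_12 -> bool) : stt :=
  if fin s then s
  else if disc s then
    mk false false (dr false s) (dr true s)
       [ffun d => r (d, inord 5) && (dr false s != Some d)]
       [ffun d => r (d, inord 6) && (dr true s != Some d)]
       (ac false s) (ac true s) (cm s)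
  else if r (nm 11) then
    mk false false (dr false s) (dr true s) (ch false s) (ch true s)
       (ac false s && r (nm 7)) (ac true s && r (nm 9))
       (if (~~ r (nm 7)) != (~~ r (nm 9)) then ~~ r (nm 7) else cm s)
  else mk false true (dr false s) (dr true s) (ch false s) (ch true s)
       (ac false s) (ac true s) (cm s).

Definition initf (b1 b2 : bool) (o1 o2 : option 'I_6) (ld : bool) (oc : 'I_6 -> bool) : stt :=
  mk true false o1 o2 [ffun=> false] [ffun=> false] (o1 != None) (o2 != None) false.

Definition outf (s : stt) : option 'I_6 := if cm s then dr true s else dr false s.

Definition Alg : algo := @Algo stt 12 initf partf beepf stepf fin outf.

Lemma Alg_term : terminating Alg.
Proof. by move=> s o r; rewrite /= /stepf => ->. Qed.

Lemma disc_mk di fi o1 o2 c1 c2 a1 a2 c : disc (mk di fi o1 o2 c1 c2 a1 a2 c) = di.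
Proof. by []. Qed.
Lemma fin_mk di fi o1 o2 c1 c2 a1 a2 c : fin (mk di fi o1 o2 c1 c2 a1 a2 c) = fi.
Proof. by []. Qed.
Lemma dr_mk k di fi o1 o2 c1 c2 a1 a2 c : dr k (mk di fi o1 o2 c1 c2 a1 a2 c) = if k then o2 else o1.
Proof. by case: k. Qed.
Lemma ch_mk k di fi o1 o2 c1 c2 a1 a2 c : ch k (mk di fi o1 o2 c1 c2 a1 a2 c) = if k then c2 else c1.
Proof. by case: k. Qed.
Lemma ac_mk k di fi o1 o2 c1 c2 a1 a2 c : ac k (mk di fi o1 o2 c1 c2 a1 a2 c) = if k then a2 else a1.
Proof. by case: k. Qed.
Lemma cm_mk di fi o1 o2 c1 c2 a1 a2 c : cm (mk di fi o1 o2 c1 c2 a1 a2 c) = c.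
Proof. by []. Qed.

Lemma mod_step x i : x %% 2 ^ i.+1 = odd (x %/ 2 ^ i) * 2 ^ i + x %% 2 ^ i.
Proof.
have P0 : 0 < 2 ^ i by rewrite expn_gt0.
set P := 2 ^ i.
have Hr : x %% P < P by rewrite ltn_pmod.
rewrite {1}(divn_eq x P) {1}(divn_eq (x %/ P) 2) modn2 expnSr -/P.
rewrite mulnDl -mulnA (mulnC 2 P) -addnA modnMDl modn_small //.
by case: (odd (x %/ P)); rewrite ?mul0n ?mul1n; lia.
Qed.

Lemma cmp_step x y i : (y %% 2 ^ i.+1 < x %% 2 ^ i.+1) =
  if odd (x %/ 2 ^ i) != odd (y %/ 2 ^ i) then odd (x %/ 2 ^ i)
  else (y %% 2 ^ i < x %% 2 ^ i).
Proof.
have P0 : 0 < 2 ^ i by rewrite expn_gt0.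
rewrite !mod_step.
have Hx : x %% 2 ^ i < 2 ^ i by rewrite ltn_pmod.
have Hy : y %% 2 ^ i < 2 ^ i by rewrite ltn_pmod.
move: Hx Hy; set P := 2 ^ i; set rx := x %% P; set ry := y %% P.
case: (odd (x %/ P)); case: (odd (y %/ P)); rewrite /= ?mul0n ?mul1n => Hx Hy.
- by rewrite ltn_add2l.
- apply/idP; lia.
- apply/negbTE; rewrite -leqNgt; lia.
- by [].
Qed.

Lemma dvd_step h i : (2 ^ i %| h) && ~~ odd (h %/ 2 ^ i) = (2 ^ i.+1 %| h).
Proof.
have P0 : 0 < 2 ^ i by rewrite expn_gt0.
case: (boolP (2 ^ i %| h)) => /= H.
  move/dvdnP: H => [m ->]; rewrite mulnK // expnSr (mulnC m) dvdn_pmul2l //.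
  by rewrite dvdn2.
apply/esym/negbTE; apply: contra H; apply: dvdn_trans.
by rewrite expnS dvdn_mull.
Qed.

Section Run.
Variables (X S1 S2 : {fset node}) (D1 D2 : node -> option 'I_6).
Hypotheses (sub1 : (S1 `<=` X)%fset) (sub2 : (S2 `<=` X)%fset)
  (spf1 : IsSPF X S1 (par_of D1)) (spf2 : IsSPF X S2 (par_of D2)).

Definition Dk (k : bool) := if k then D2 else D1.
Definition hk (k : bool) u := if k then hN spf2 u else hN spf1 u.

Lemma hk_par k u e : u \in X -> Dk k u = Some e -> hk k u = (hk k (shift u e)).+1.
Proof. by case: k; [apply: (hN_par sub2) | apply: (hN_par sub1)]. Qed.

Lemma hk_gt0 k u : u \in X -> (0 < hk k u) = (Dk k u != None).
Proof. by case: k; [apply: (hN_gt0 sub2) | apply: (hN_gt0 sub1)]. Qed.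

Lemma hk_root k u : u \in X -> Dk k u = None -> hk k u = 0.
Proof. by case: k; [apply: (hN_root sub2) | apply: (hN_root sub1)]. Qed.

Lemma park_in k u e : u \in X -> Dk k u = Some e -> shift u e \in X.
Proof. by case: k; [apply: (par_in spf2) | apply: (par_in spf1)]. Qed.

Lemma no2cyc_k k u e : u \in X -> Dk k u = Some e -> Dk k (shift u e) = Some (opp e) -> False.
Proof. by case: k; [apply: (no2cyc sub2) | apply: (no2cyc sub1)]. Qed.

Lemma hk_anc k u m : u \in X -> m <= hk k u -> exists2 v, v \in X & hk k v = m.
Proof. by case: k; [apply: (hN_anc sub2) | apply: (hN_anc sub1)]. Qed.

Lemma hk_lt k u : u \in X -> hk k u < #|` X|.
Proof. by case: k; [apply: (hN_lt sub2) | apply: (hN_lt sub1)]. Qed.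

Definition childspec k v d :=
  (shift v d \in X) && (Dk k (shift v d) == Some (opp d)) && (Dk k v != Some d).
Definition ak i k v := (Dk k v != None) && (2 ^ i %| hk k v).
Definition phi i k v := odd (hk k v %/ 2 ^ i).

Lemma phi_par i k u e : u \in X -> Dk k u = Some e ->
  phi i k u = ak i k u (+) phi i k (shift u e).
Proof.
move=> uX De; rewrite /phi /ak (hk_par uX De) divnS ?expn_gt0 // oddD oddb.
by rewrite De.
Qed.

Lemma phi_root i k u : u \in X -> Dk k u = None -> phi i k u = false.
Proof. by move=> uX De; rewrite /phi (hk_root uX De) div0n. Qed.

Definition InvP i (q : X -> st Alg) := forall v : X,
  [/\ disc (q v) = false /\ fin (q v) = false, (forall k, dr k (q v) = Dk k (val v)),
      (forall k, ch k (q v) = [ffun d => childspec k (val v) d]),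
      (forall k, ac k (q v) = ak i k (val v)) &
      cm (q v) = (hk true (val v) %% 2 ^ i < hk false (val v) %% 2 ^ i)].

Definition pk (k b : bool) : 'I_12 := inord ((if k then 2 else 0) + b).

Lemma pk_val k b : nat_of_ord (pk k b) = (if k then 2 else 0) + b.
Proof. by rewrite /pk inordK //; case: k; case: b. Qed.

Lemma pk_lt4 k b : pk k b < 4.
Proof. by rewrite pk_val; case: k; case: b. Qed.
Lemma pk_gt1 k b : (1 < pk k b) = k.
Proof. by rewrite pk_val; case: k; case: b. Qed.
Lemma pk_odd k b : odd (pk k b) = b.
Proof. by rewrite pk_val; case: k; case: b. Qed.

Section P.
Variables (i : nat) (q : X -> st Alg).
Hypothesis inv : InvP i q.

Definition pn k (u : node) d (b : bool) : option (option (bool * bool)) :=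
  if Dk k u == Some d then Some (Some (k, phi i k u (+) (b (+) ak i k u)))
  else if childspec k u d then Some (Some (k, phi i k u (+) b)) else None.

Definition valf (x : X * lab Alg) : option (option (bool * bool)) :=
  if x.2.1 != ord0 then None else
  match nat_of_ord x.2.2 with
  | 7 => Some (Some (false, phi i false (val x.1)))
  | 8 => Some (Some (false, ~~ phi i false (val x.1)))
  | 9 => Some (Some (true, phi i true (val x.1)))
  | 10 => Some (Some (true, ~~ phi i true (val x.1)))
  | 11 => Some None
  | _ => None end.

Lemma valf_nm (x : X) k (c : bool) :
  valf (x, nm (nb k + c)) = Some (Some (k, phi i k (val x) (+) c)).
Proof.
rewrite /valf /nm /= inordK; last by case: k; case: c.
by case: k; case: c => //=; rewrite ?addbT ?addbF.
Qed.

Lemma valf_junk (x : X) d : valf (x, (d, ord0)) = None.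
Proof. by rewrite /valf /=; case: (d != ord0). Qed.

Lemma valf_11 (x : X) : valf (x, nm 11) = Some None.
Proof. by rewrite /valf /nm /= inordK. Qed.

Lemma partf_eq (u : X) d (p : 'I_12) : p < 4 ->
  partf (q u) (d, p) =
  if Dk (1 < p) (val u) == Some d then nm (nb (1 < p) + (odd p (+) ak i (1 < p) (val u)))
  else if childspec (1 < p) (val u) d then nm (nb (1 < p) + odd p) else (d, ord0).
Proof.
move=> p4; case: (inv u) => [[H1 _] H3 H4 H5 _].
rewrite /partf H1 /= p4 H3 H4 H5 ffunE.
by have -> : (nat_of_ord p == 4) = false by apply/negbTE; rewrite neq_ltn p4.
Qed.

Lemma partf_ge4 (u : X) d (p : 'I_12) : 4 <= p ->
  partf (q u) (d, p) = if nat_of_ord p == 4 then nm 11 else (d, ord0).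
Proof.
move=> p4; case: (inv u) => [[H1 _] _ _ _ _].
by rewrite /partf H1 /= ltnNge p4.
Qed.

Lemma valf_part (u : X) d (p : 'I_12) : p < 4 ->
  valf (u, partf (q u) (d, p)) = pn (1 < p) (val u) d (odd p).
Proof.
move=> p4; rewrite partf_eq // /pn.
case: ifP => _; first by rewrite valf_nm.
case: ifP => _; first by rewrite valf_nm.
by rewrite valf_junk.
Qed.

Lemma pn_par k (u : node) e b : u \in X -> Dk k u = Some e ->
  pn k u e b = pn k (shift u e) (opp e) b.
Proof.
move=> uX De.
have wX := park_in uX De.
rewrite /pn De eqxx.
have -> : (Dk k (shift u e) == Some (opp e)) = false.
  by apply/negbTE/eqP => H; apply: (no2cyc_k uX De H).
rewrite /childspec shift_opp uX oppK De eqxx /=.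
have -> : (Dk k (shift u e) != Some (opp e)).
  by apply/eqP => H; apply: (no2cyc_k uX De H).
rewrite (phi_par i uX De).
by case: (ak i k u); case: b; case: (phi i k (shift u e)).
Qed.

Lemma pn_sym k (u : node) d b : u \in X -> shift u d \in X ->
  pn k u d b = pn k (shift u d) (opp d) b.
Proof.
move=> uX wX.
case E: (Dk k u == Some d); first by apply: pn_par => //; apply/eqP.
case E2: (Dk k (shift u d) == Some (opp d)).
  by rewrite (pn_par b wX (eqP E2)) shift_opp oppK.
by rewrite /pn E E2 /childspec E2 shift_opp oppK E /= !andbF.
Qed.

Lemma valf_pin (u w : X) d (p : 'I_(npins Alg)) : val w = shift (val u) d ->
  valf (u, partf (q u) (d, p)) = valf (w, partf (q w) (opp d, p)).
Proof.
move=> E.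
case: (ltnP p 4) => p4.
  rewrite !valf_part // E; apply: pn_sym; first exact: (valP u).
  by rewrite -E (valP w).
rewrite !partf_ge4 //.
case: ifP => _; first by rewrite !valf_11.
by rewrite !valf_junk.
Qed.

Lemma sc_valf a b : same_circuit Alg X q a b -> valf a = valf b.
Proof. apply: sc_inv => u w d p E; exact: valf_pin. Qed.


Lemma beepf_eq (u : X) l : beepf (q u) l =
  [|| (Dk false (val u) == None) && (l == nm 7), (Dk true (val u) == None) && (l == nm 9)
    | (ak i false (val u) || ak i true (val u)) && (l == nm 11)].
Proof.
case: (inv u) => [[H1 H2] H3 _ H5 _].
by rewrite /beepf H2 H1 !H3 !H5.
Qed.

Lemma conn_root k (v : X) : exists2 r : X, Dk k (val r) = None &
  same_circuit Alg X q (r, nm (nb k)) (v, nm (nb k + phi i k (val v))).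
Proof.
suff K : forall j (v : X), hk k (val v) = j -> exists2 r : X, Dk k (val r) = None &
  same_circuit Alg X q (r, nm (nb k)) (v, nm (nb k + phi i k (val v))).
  exact: (K _ v erefl).
move=> j; elim: j => [|j IH] {}v E.
  have vX := valP v.
  have Dn : Dk k (val v) = None.
    by move: (hk_gt0 k vX); rewrite E ltnn => /esym /negbFE /eqP.
  exists v => //; rewrite phi_root // addn0; exact: connect0.
have vX : val v \in X := valP v.
case De: (Dk k (val v)) => [e|]; last by rewrite hk_root in E.
have pX := park_in vX De.
pose p : X := [` pX]%fset.
have Ep : hk k (val p) = j by move: E; rewrite (hk_par vX De) => -[].
case: (IH p Ep) => r Dr scp.
exists r => //; apply: sc_trans scp _; apply: sc_link.
apply: (@linkI Alg X q _ _ (opp e) (pk k (phi i k (val p)))).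
- by rewrite /= shift_opp.
- rewrite /= partf_eq ?pk_lt4 // pk_gt1 pk_odd.
  have -> : (Dk k (val p) == Some (opp e)) = false.
    by apply/negbTE/eqP => H; apply: (no2cyc_k vX De H).
  rewrite /childspec /= shift_opp vX oppK De eqxx /=.
  have -> // : (Dk k (shift (val v) e) != Some (opp e)).
  by apply/eqP => H; apply: (no2cyc_k vX De H).
- rewrite /= oppK partf_eq ?pk_lt4 // pk_gt1 pk_odd De eqxx.
  by rewrite (phi_par i vX De) addbC.
Qed.

Lemma recv_prim k (v : X) : recv Alg X q v (nm (nb k)) = ~~ phi i k (val v).
Proof.
apply/idP/idP.
- move/recvP => [u [l [bp sc]]].
  have := sc_valf sc.
  have -> : nm (nb k) = nm (nb k + false) by rewrite addn0.
  rewrite valf_nm addbF.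
  move: bp; rewrite /= beepf_eq => /or3P [] /andP [/eqP Dn /eqP ->].
  + have -> : nm 7 = nm (nb false + false) by [].
    by rewrite valf_nm phi_root ?(valP u) // => -[_ <-].
  + have -> : nm 9 = nm (nb true + false) by [].
    by rewrite valf_nm phi_root ?(valP u) // => -[_ <-].
  + by rewrite valf_11.
- move=> ph; case: (conn_root k v) => r Dr sc.
  apply/recvP; exists r, (nm (nb k)); split; last by rewrite (negbTE ph) addn0 in sc.
  rewrite /= beepf_eq; case: k {sc ph} Dr => /= ->; apply/or3P;
  [apply: Or32 | apply: Or31]; by apply/eqP.
Qed.

Lemma glob_conn (cX : connectedX X) (u v : X) : same_circuit Alg X q (u, nm 11) (v, nm 11).
Proof.
case: (cX _ _ (valP u) (valP v)) => n W.
elim: n u W => [|n IH] u /= W.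
  have -> : u = v by apply: val_inj; exact: W.
  exact: connect0.
case: W => d [wX W].
pose w : X := [` wX]%fset.
apply: sc_trans (IH w W); apply: sc_link.
have H4 : forall x e, partf (q x) (e, inord 4) = nm 11.
  by move=> x e; rewrite partf_ge4 inordK.
by apply: (@linkI Alg X q _ _ d (inord 4)); rewrite /= ?H4.
Qed.

Lemma recv_glob (cX : connectedX X) (v : X) :
  recv Alg X q v (nm 11) = [exists u : X, ak i false (val u) || ak i true (val u)].
Proof.
apply/idP/idP.
- move/recvP => [u [l [bp sc]]].
  have := sc_valf sc; rewrite valf_11.
  move: bp; rewrite /= beepf_eq => /or3P [] /andP [H /eqP ->].
  + have -> : nm 7 = nm (nb false + false) by [].
    by rewrite valf_nm.
  + have -> : nm 9 = nm (nb true + false) by [].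
    by rewrite valf_nm.
  + by move=> _; apply/existsP; exists u.
- move/existsP => [u au]; apply/recvP; exists u, (nm 11); split.
    by rewrite /= beepf_eq au eqxx !orbT.
  exact: glob_conn.
Qed.

End P.

Lemma round_eq (q : X -> st Alg) v :
  round Alg X q v = stepf (q v) (occ X v) (recv Alg X q v).
Proof. by []. Qed.

Definition actb i := [exists u : X, ak i false (val u) || ak i true (val u)].

Lemma R2 (cX : connectedX X) i q : InvP i q -> actb i -> InvP i.+1 (round Alg X q).
Proof.
move=> inv act v; rewrite round_eq.
case: (inv v) => [[H1 H2] H3 H4 H5 H6].
rewrite /stepf H2 H1 (recv_glob inv cX v) -/(actb i) act.
have r7 := recv_prim inv false v; have r9 := recv_prim inv true v.
rewrite /nb in r7 r9; rewrite r7 r9 !negbK.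
split.
- by [].
- by move=> k; case: k; [exact: (H3 true) | exact: (H3 false)].
- by move=> k; case: k; [exact: (H4 true) | exact: (H4 false)].
- move=> k; case: k.
    by have := H5 true; rewrite /ac /= => ->; rewrite /ak /phi -andbA dvd_step.
  by have := H5 false; rewrite /ac /= => ->; rewrite /ak /phi -andbA dvd_step.
- by move: H6; rewrite /cm /= => ->; rewrite cmp_step.
Qed.

Lemma R3 (cX : connectedX X) i q : InvP i q -> ~~ actb i -> forall v : X,
  fin (round Alg X q v) = true /\
  outf (round Alg X q v) =
    if hk true (val v) %% 2 ^ i < hk false (val v) %% 2 ^ i then D2 (val v) else D1 (val v).
Proof.
move=> inv nact v; rewrite round_eq.
case: (inv v) => [[H1 H2] H3 H4 H5 H6].
rewrite /stepf H2 H1 (recv_glob inv cX v) -/(actb i) (negbTE nact).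
split => //.
by move: H6 (H3 true) (H3 false); rewrite /outf /cm /dr /= => -> -> ->.
Qed.

Definition pd (k : bool) : 'I_12 := inord (if k then 6 else 5).

Lemma R1 ldr : InvP 0 (round Alg X (init_conf Alg X S1 S2 ldr D1 D2)).
Proof.
set q0 := init_conf Alg X S1 S2 ldr D1 D2.
have idp : forall u p, part Alg (q0 u) p = p by [].
have bq : forall (u : X) l, beep Alg (q0 u) l =
    ((D1 (val u) == Some l.1) && (nat_of_ord l.2 == 5)) ||
    ((D2 (val u) == Some l.1) && (nat_of_ord l.2 == 6)) by [].
have rd : forall k (v : X) d, recv Alg X q0 v (d, pd k) =
    (Dk k (val v) == Some d) || ((shift (val v) d \in X) && (Dk k (shift (val v) d) == Some (opp d))).
  move=> k v d; apply/idP/idP.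
  - move/recvP => [u [[l1 l2] [bp sc]]].
    case: (sc_pair idp sc) => [[Ev Ed Ep]|[/= E [E1 E2]]].
      move: bp; rewrite -Ev -Ed -Ep bq /pd /= inordK; last by destruct k.
      by clear sc Ep; case: k => /= /orP [] /andP [H1 H2]; rewrite ?H1 //; move: H2.
    have l1E : l1 = opp d by rewrite E1 oppK.
    have uE : val u = shift (val v) d.
      by apply: (@shift_inj _ _ (opp d)); rewrite shift_opp -l1E; symmetry; exact: E.
    move: bp; rewrite bq /= -E2 /pd inordK; last by destruct k.
    rewrite -uE (valP u) l1E /=.
    by clear sc E2 E1; case: k => /= /orP [] /andP [H1 H2]; rewrite -?uE ?H1 ?(valP u) ?orbT //; move: H2.
  - case/orP => [Dd|/andP [wX Dw]].
      apply/recvP; exists v, (d, pd k); split; last exact: connect0.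
      rewrite bq /pd /= inordK; last by destruct k.
      by case: k Dd => /= ->; rewrite ?orbT.
    pose w : X := [` wX]%fset.
    apply/recvP; exists w, (opp d, pd k); split.
      rewrite bq /pd /= inordK; last by destruct k.
      by case: k Dw => /= ->; rewrite ?orbT.
    apply: sc_link; apply: (@linkI Alg X q0 _ _ (opp d) (pd k)) => //=.
      by rewrite shift_opp.
    by rewrite oppK.
move=> v; rewrite round_eq.
have -> : stepf (q0 v) (occ X v) (recv Alg X q0 v) =
  mk false false (D1 (val v)) (D2 (val v))
    [ffun d => recv Alg X q0 v (d, inord 5) && (D1 (val v) != Some d)]
    [ffun d => recv Alg X q0 v (d, inord 6) && (D2 (val v) != Some d)]
    (D1 (val v) != None) (D2 (val v) != None) false by [].
split.
- by [].
- by move=> k; rewrite dr_mk; case: k.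
- move=> k; apply/ffunP => d; rewrite ch_mk.
  have := rd k v d; rewrite /pd.
  case: k; rewrite !ffunE => ->; rewrite /childspec /Dk /=;
    [case: (D2 (val v) == Some d) | case: (D1 (val v) == Some d)];
    by rewrite /= ?andbT ?andbF ?orbF.
- by move=> k; rewrite ac_mk /ak expn0 dvd1n andbT; case: k.
- by rewrite cm_mk expn0 !modn1.
Qed.

End Run.

Theorem mainTheorem11 :
  exists (A : algo) (C : nat), terminating A /\
  forall (X S1 S2 : {fset node}) (ldr : node) (D1 D2 : node -> option 'I_6),
    connectedX X -> no_holes X -> ldr \in X ->
    (S1 `<=` X)%fset -> (S2 `<=` X)%fset -> (S1 != fset0)%fset -> (S2 != fset0)%fset ->
    IsSPF X S1 (par_of D1) -> IsSPF X S2 (par_of D2) ->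
    exists t, t <= C * (trunc_log 2 #|` X|).+1 /\
      (forall v : X, final A (run A X S1 S2 ldr D1 D2 t v)) /\
      IsSPF X (S1 `|` S2)%fset (par_of (out_dirs A X (run A X S1 S2 ldr D1 D2 t))).
Proof.
exists Alg, 3; split; first exact: Alg_term.
move=> X S1 S2 ldr D1 D2 cX nh ldrX sub1 sub2 ne1 ne2 spf1 spf2.
set n := #|` X|.
have hw : ~~ actb spf1 spf2 (trunc_log 2 n).+1.
  apply/existsP => -[u].
  have Hb : forall k, ~~ ((Dk D1 D2 k (val u) != None) &&
                         (2 ^ (trunc_log 2 n).+1 %| hk spf1 spf2 k (val u))).
    move=> k; apply/negP => /andP [Dn dv].
    have h0 : 0 < hk spf1 spf2 k (val u) by rewrite hk_gt0 ?(valP u).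
    have := dvdn_leq h0 dv.
    have := hk_lt sub1 sub2 spf1 spf2 k (valP u).
    have := trunc_log_ltn n (isT : 1 < 2).
    rewrite -/n; lia.
  by rewrite /ak (negbTE (Hb false)) (negbTE (Hb true)).
have hex : exists i, ~~ actb spf1 spf2 i by exists (trunc_log 2 n).+1.
set istar := ex_minn hex.
have [nact minI] : ~~ actb spf1 spf2 istar /\
    forall j, ~~ actb spf1 spf2 j -> istar <= j.
  by rewrite /istar; case: ex_minnP.
have invs : forall j, j <= istar -> InvP spf1 spf2 j (run Alg X S1 S2 ldr D1 D2 j.+1).
  elim => [|j IH] jle; first exact: R1.
  rewrite /run iterS; apply: R2 => //; first exact: IH (ltnW jle).
  case: (boolP (actb spf1 spf2 j)) => // H.
  by move: (minI _ H); rewrite leqNgt jle.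
have R := R3 sub1 sub2 cX (invs _ (leqnn istar)) nact.
exists istar.+2; split; [|split].
- have := minI _ hw; lia.
- move=> v; rewrite /run iterS; by case: (R v).
- apply: (@merge_spf X S1 S2 D1 D2 _ sub1 sub2 spf1 spf2) => u uX.
  rewrite /out_dirs insubT /run iterS.
  case: (R [` uX]%fset) => _ /= ->.
  have small : forall k, hk spf1 spf2 k u < 2 ^ istar.
    move=> k; rewrite ltnNge; apply/negP => H.
    case: (hk_anc sub1 sub2 uX H) => w wX hkw.
    have Dn : Dk D1 D2 k w != None by rewrite -(hk_gt0 sub1 sub2 spf1 spf2 k wX) hkw expn_gt0.
    have E : forall k', ak spf1 spf2 istar k' (val [` wX]%fset) = ak spf1 spf2 istar k' w by [].
    move/negP: nact; apply; apply/existsP; exists [` wX]%fset; rewrite !E.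
    by case: k {H} hkw Dn => hkw Dn; rewrite /ak hkw dvdnn Dn ?orbT.
  by rewrite !modn_small ?(small true) ?(small false).
Qed.
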